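(* The RMMS is self-maximizing: for every finite item set $M$, every $n\ge1$, and every two normalized monotone valuations $v,v'$ on $M$, there exists a bundle $T\subseteq M$ such that $v'(T)\ge \mathrm{RMMS}(M,v',n)$ and $v(T)\le \mathrm{RMMS}(M,v,n)$.
   Context: A valuation is a function $v:2^M\to\mathbb{R}$ that is normalized ($v(\emptyset)=0$) and monotone ($v(S)\le v(T)$ whenever $S\subseteq T$). Residual maximin share: $\mathrm{RMMS}(M,v,n)$ is the largest real $t$ with the following property: for every $0\le k<n$ and every $k$ pairwise disjoint bundles $B_1,\dots,B_k\subseteq M$ with $v(B_j)<t$ for all $j$, the set $M\setminus(B_1\cup\dots\cup B_k)$ can be partitioned into $n-k$ bundles each of value (under $v$) at least $t$. *)

(* Defs.v *)
From HB Require Import structures.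
From mathcomp Require Import all_boot all_order all_algebra.
From mathcomp Require Import reals.
From mathcomp Require classical_sets.
Set Implicit Arguments. Unset Strict Implicit. Unset Printing Implicit Defensive.
Import Order.TTheory GRing.Theory Num.Theory.
Local Open Scope ring_scope.

Definition valuation (R : realType) (M : finType) (v : {set M} -> R) : Prop :=
  v set0 = 0 /\ (forall S T : {set M}, S \subset T -> v S <= v T).

Definition pw_disjoint (M : finType) (k : nat) (B : 'I_k -> {set M}) : Prop :=
  forall i j : 'I_k, i != j -> [disjoint B i & B j].

(* The RMMS property of threshold t. Bundles of a partition may be empty. *)
Definition rmms_prop (R : realType) (M : finType) (v : {set M} -> R) (n : nat)
    (t : R) : Prop :=
  forall (k : nat), (k < n)%N ->
  forall B : 'I_k -> {set M}, pw_disjoint B -> (forall j, v (B j) < t) ->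
  exists P : 'I_(n - k) -> {set M},
    [/\ pw_disjoint P,
        \bigcup_(i < n - k) P i = ~: (\bigcup_(j < k) B j)
      & forall i, t <= v (P i)].

(* RMMS(M,v,n) = the largest t with the RMMS property (as a supremum; the
   supremum is attained, so it is the maximum). *)
Definition RMMS (R : realType) (M : finType) (v : {set M} -> R) (n : nat) : R :=
  sup (fun t : R => rmms_prop v n t).

(* Main.v *)
Require Import Defs.
From HB Require Import structures.
From mathcomp Require Import all_boot all_order all_algebra.
From mathcomp Require Import reals.
From mathcomp Require classical_sets.
Import Order.TTheory GRing.Theory Num.Theory.
Local Open Scope ring_scope.

Section Aux.
Variables (R : realType) (M : finType) (n : nat) (w : {set M} -> R).
Hypothesis n1 : (1 <= n)%N.
Hypothesis hw : valuation w.

Lemma w_ge0 (T : {set M}) : 0 <= w T.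
Proof. case: hw => h0 hm; rewrite -h0; apply: hm; exact: sub0set. Qed.

Lemma w_le_top (T : {set M}) : w T <= w setT.
Proof. case: hw => h0 hm; apply: hm; exact: subsetT. Qed.

Lemma zero_in : rmms_prop w n 0.
Proof.
move=> k kn B _ HB.
case: k kn B HB => [|k] kn B HB; last first.
  by have := HB ord0; rewrite ltNge w_ge0.
exists (fun i : 'I_(n - 0) => if val i == 0%N then setT else set0); split.
- move=> i j ij; case: ifP => hi; case: ifP => hj; rewrite -setI_eq0 ?setI0 ?set0I //.
  by move: ij; rewrite -(inj_eq val_inj) (eqP hi) (eqP hj) eqxx.
- apply/setP => x; rewrite big_ord0 setC0 in_setT.
  apply/bigcupP; have h : (0 < n - 0)%N by rewrite subn0.
  by exists (Ordinal h) => //=; rewrite in_setT.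
- by move=> i; apply: w_ge0.
Qed.

Lemma prop_le_top t : rmms_prop w n t -> t <= w setT.
Proof.
move=> Ht.
have h : (0 < n)%N by [].
have [P [_ _ HP]] := Ht 0%N h (fun i => match i with Ordinal _ p => False_rect _ (notF p) end)
  (fun i => match i with Ordinal _ p => False_rect _ (notF p) end)
  (fun i => match i with Ordinal _ p => False_rect _ (notF p) end).
have h' : (0 < n - 0)%N by rewrite subn0.
exact: le_trans (HP (Ordinal h')) (w_le_top _).
Qed.

Lemma has_sup_w : classical_sets.has_sup (fun t : R => rmms_prop w n t).
Proof.
split; first by exists 0; apply: zero_in.
by exists (w setT) => t Ht; apply: prop_le_top.
Qed.

Lemma attained : rmms_prop w n (RMMS w n).
Proof.
set r := RMMS w n.
set m := \big[Num.max/(r - 1)]_(T | w T < r) w T.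
have mr : m < r.
  rewrite /m; elim/big_ind: _ => //; first by rewrite ltrBlDr ltrDl.
  by move=> x y hx hy; rewrite gt_max hx hy.
have mub : forall T, w T < r -> w T <= m.
  move=> T hT; rewrite /m (bigD1 T) //=; by rewrite le_max lexx.
have e0 : 0 < r - m by rewrite subr_gt0.
have [s Hs hs] := sup_adherent e0 has_sup_w.
rewrite opprB addrC subrK in hs.
move=> k kn B pB HB.
have HB' : forall j, w (B j) < s.
  by move=> j; apply: le_lt_trans (mub _ (HB j)) hs.
have [P [pP uP HP]] := Hs k kn B pB HB'.
exists P; split => // i.
rewrite leNgt; apply/negP => hi.
have := le_lt_trans (HP i) (le_lt_trans (mub _ hi) hs).
by rewrite ltxx.
Qed.

End Aux.

Theorem proposition3 (R : realType) (M : finType) (n : nat) (v v' : {set M} -> R) :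
  (1 <= n)%N -> valuation v -> valuation v' ->
  exists T : {set M}, RMMS v' n <= v' T /\ v T <= RMMS v n.
Proof.
move=> n1 hv hv'.
set r := RMMS v n; set r' := RMMS v' n.
case: (boolP [exists T, (r' <= v' T) && (v T <= r)]).
  by move=> /existsP [T /andP [h1 h2]]; exists T.
rewrite negb_exists => /forallP H.
have HT : forall T, r' <= v' T -> r < v T.
  by move=> T hT; have := H T; rewrite hT /= -ltNge.
exfalso.
set t := \big[Num.min/(v setT)]_(T | r' <= v' T) v T.
have tr : r < t.
  rewrite /t; elim/big_ind: _ => //.
  - by apply: HT; apply: (@prop_le_top R M n v' n1 hv'); apply: (@attained R M n v' n1 hv').
  - by move=> x y hx hy; rewrite lt_min hx hy.
have tlb : forall T, r' <= v' T -> t <= v T.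
  move=> T hT; rewrite /t (bigD1 T) //=; by rewrite ge_min lexx.
have Ht : rmms_prop v n t.
  move=> k kn B pB HB.
  have HB' : forall j, v' (B j) < r'.
    move=> j; rewrite ltNge; apply/negP => hj.
    by have := lt_le_trans (HB j) (tlb _ hj); rewrite ltxx.
  have [P [pP uP HP]] := @attained R M n v' n1 hv' k kn B pB HB'.
  by exists P; split => // i; apply: tlb.
have := sup_upper_bound (@has_sup_w R M n v n1 hv) Ht.
by rewrite -/r leNgt tr.
Qed.
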